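(* Fix $\delta\in[0,1/2]$. Alice flips two independent coins $c_1,c_2\in\{0,1\}$ with $\Pr[c_1=0]=\Pr[c_2=0]=\tfrac12+\delta$. Bob, without knowledge of $c_1,c_2$, sends Alice a classical bit $b$ and a single-qubit state $\rho$ (where $b$ may be chosen at random with probabilities $q_0,q_1$ and the state $\rho_b$ may depend on $b$). Alice measures $\rho$ in the computational basis $\{|0\rangle,|1\rangle\}$ if $c_1=0$ and in the Hadamard basis $\{|+\rangle,|-\rangle\}$ if $c_1=1$, obtaining $a\in\{0,1\}$. Bob wins if $a=b$ when $c_2=0$, and $a\ne b$ when $c_2=1$. Then Bob's maximal winning probability over all strategies is $$\frac12+\delta\sqrt{\frac{1+4\delta^2}{2}},$$ achieved by the deterministic strategy $b=0$ with $\rho=\tfrac12(I+r_x\sigma_x+r_z\sigma_z)$, $r_x=\frac{1-2\delta}{\sqrt{2+8\delta^2}}$, $r_z=\frac{1+2\delta}{\sqrt{2+8\delta^2}}$. In particular the value is $1/2$ for $\delta=0$ and $1$ for $\delta=1/2$.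
   Context: $|\pm\rangle=\tfrac{1}{\sqrt2}(|0\rangle\pm|1\rangle)$; measurement outcome $0$ corresponds to $|0\rangle$ or $|+\rangle$ and $1$ to $|1\rangle$ or $|-\rangle$; $\sigma_x,\sigma_z$ are Pauli matrices. *)

(* Defs.v *)
From HB Require Import structures.
From mathcomp Require Import all_boot all_order all_algebra.
From mathcomp Require Import complex.
Set Implicit Arguments. Unset Strict Implicit. Unset Printing Implicit Defensive.
Import Order.TTheory GRing.Theory Num.Theory.
Local Open Scope ring_scope.
Local Open Scope complex_scope.

Section Qubit.
Variable R : rcfType.
Local Notation C := R[i].

Definition adjmx m n (A : 'M[C]_(m, n)) : 'M[C]_(n, m) :=
  \matrix_(i < n, j < m) (A j i)^*.

(* single-qubit density matrix: positive semidefinite (v^dagger rho v >= 0 in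
   the order of C, i.e. real and nonnegative, for every v) with unit trace *)
Definition is_density (rho : 'M[C]_2) : Prop :=
  (forall v : 'cV[C]_2, 0 <= (adjmx v *m rho *m v) 0 0) /\ \tr rho = 1.

Definition ket0 : 'cV[C]_2 := \col_(i < 2) (if i == 0 then 1 else 0).
Definition ket1 : 'cV[C]_2 := \col_(i < 2) (if i == 0 then 0 else 1).
Definition invsqrt2 : C := ((Num.sqrt (2 : R))^-1)%:C.
Definition ketp : 'cV[C]_2 := invsqrt2 *: (ket0 + ket1).
Definition ketm : 'cV[C]_2 := invsqrt2 *: (ket0 - ket1).

Definition outcome_vec (c1 a : bool) : 'cV[C]_2 :=
  if c1 then (if a then ketm else ketp) else (if a then ket1 else ket0).

(* Born-rule probability <e| rho |e> (real part; it is real for a density matrix) *)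
Definition born (e : 'cV[C]_2) (rho : 'M[C]_2) : R :=
  @complex.Re R ((adjmx e *m rho *m e) 0 0).

Definition sigma_x : 'M[C]_2 :=
  \matrix_(i < 2, j < 2) (if i == j then 0 else 1).
Definition sigma_z : 'M[C]_2 :=
  \matrix_(i < 2, j < 2) (if i == j then (if i == 0 then 1 else -1) else 0).

Definition coin (delta : R) (c : bool) : R :=
  if c then 1/2 - delta else 1/2 + delta.

Definition strategy (q : bool -> R) (rho : bool -> 'M[C]_2) : Prop :=
  (forall b, 0 <= q b) /\ q false + q true = 1 /\ (forall b, is_density (rho b)).

(* Bob wins iff a = b xor c2 *)
Definition win_prob (delta : R) (q : bool -> R) (rho : bool -> 'M[C]_2) : R :=
  \sum_(c1 : bool) \sum_(c2 : bool) \sum_(b : bool)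
    coin delta c1 * coin delta c2 * q b * born (outcome_vec c1 (addb b c2)) (rho b).

Definition opt_value (delta : R) : R :=
  1/2 + delta * Num.sqrt ((1 + 4 * delta ^+ 2) / 2).

Definition opt_rx (delta : R) : R := (1 - 2 * delta) / Num.sqrt (2 + 8 * delta ^+ 2).
Definition opt_rz (delta : R) : R := (1 + 2 * delta) / Num.sqrt (2 + 8 * delta ^+ 2).

Definition opt_rho (delta : R) : 'M[C]_2 :=
  (1/2) *: (1%:M + (opt_rx delta)%:C *: sigma_x + (opt_rz delta)%:C *: sigma_z).

Definition opt_q (b : bool) : R := if b then 0 else 1.
End Qubit.

(* Main.v *)
Require Import Defs.
From HB Require Import structures.
From mathcomp Require Import all_boot all_order all_algebra.
From mathcomp Require Import complex.
From mathcomp Require Import ring lra.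
Import Order.TTheory GRing.Theory Num.Theory.
Local Open Scope ring_scope.
Local Open Scope complex_scope.

Section S.
Variable R : rcfType.
Local Notation C := R[i].

Definition cv (x y : C) : 'cV[C]_2 := \col_(i < 2) (if i == 0 then x else y).

Lemma I2_cases (i : 'I_2) : i = 0 \/ i = 1.
Proof. case: i => -[|[|//]] ?; [left|right]; exact/val_inj. Qed.

Lemma ket0E : ket0 R = cv 1%:C 0%:C.
Proof. by apply/matrixP=> i j; rewrite !mxE. Qed.
Lemma ket1E : ket1 R = cv 0%:C 1%:C.
Proof. by apply/matrixP=> i j; rewrite !mxE. Qed.
Let s : R := (Num.sqrt (2:R))^-1.
Lemma ketpE : ketp R = cv s%:C s%:C.
Proof.
apply/matrixP=> i j; rewrite !mxE /invsqrt2; case: (I2_cases i) => ->; rewrite /= ?addr0 ?add0r mulr1 //.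
Qed.
Lemma ketmE : ketm R = cv s%:C (- s)%:C.
Proof.
apply/matrixP=> i j; rewrite !mxE /invsqrt2; case: (I2_cases i) => ->; rewrite /= ?subr0 ?sub0r ?mulr1 //.
by rewrite mulrN1 rmorphN.
Qed.
Lemma quadE (x y : C) (rho : 'M[C]_2) :
  (adjmx (cv x y) *m rho *m (cv x y)) 0 0 =
  x^* * (rho 0 0 * x + rho 0 1 * y) + y^* * (rho 1 0 * x + rho 1 1 * y).
Proof.
rewrite !mxE !big_ord_recl !big_ord0 /= !mxE !big_ord_recl !big_ord0 /= !mxE /=.
rewrite !addr0.
have -> : lift ord0 ord0 = 1 :> 'I_2 by apply/val_inj.
have -> : ord0 = 0 :> 'I_2 by apply/val_inj.
ring.
Qed.

Lemma born_cv (x y : R) rho : born (cv x%:C y%:C) rho =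
  x^+2 * complex.Re (rho 0 0) + x * y * (complex.Re (rho 0 1) + complex.Re (rho 1 0))
  + y^+2 * complex.Re (rho 1 1).
Proof.
rewrite /born quadE.
move: (rho 0 0) (rho 0 1) (rho 1 0) (rho 1 1) => [a1 a2] [b1 b2] [c1 c2] [d1 d2].
rewrite -!complexr0; simpc; rewrite /=; ring.
Qed.

Lemma quad_real (x1 x2 y1 y2 a b d : R) :
  let Q := (adjmx (cv (x1 +i* x2) (y1 +i* y2)) *m
             (\matrix_(i<2,j<2) (if i == 0 then (if j == 0 then a%:C else b%:C)
                                  else (if j == 0 then b%:C else d%:C)))
             *m (cv (x1 +i* x2) (y1 +i* y2))) 0 0 in
  Q = (a * (x1^+2 + x2^+2) + 2 * b * (x1*y1 + x2*y2) + d * (y1^+2+y2^+2)) +i* 0.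
Proof.
rewrite /= quadE !mxE /=.
rewrite -!complexr0; simpc; apply/eqP; rewrite eq_complex /=; apply/andP; split; apply/eqP; ring.
Qed.

Lemma trE (rho : 'M[C]_2) : \tr rho = rho 0 0 + rho 1 1.
Proof.
rewrite /mxtrace !big_ord_recl big_ord0 addr0.
have -> : lift ord0 ord0 = 1 :> 'I_2 by apply/val_inj. by [].
Qed.

Lemma density_facts (rho : 'M[C]_2) : is_density rho ->
  let A := complex.Re (rho 0 0) in let D := complex.Re (rho 1 1) in
  let W := complex.Re (rho 0 1) + complex.Re (rho 1 0) in
  A + D = 1 /\ W^+2 <= 4 * A * D.
Proof.
move=> [hpsd htr] A D W.
have hf : forall u t : R, 0 <= u^+2 * A + u * t * W + t^+2 * D.
  move=> u t; have := hpsd (cv u%:C t%:C).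
  rewrite lecE => /andP[_ h]; move: h; rewrite -/(born _ _) born_cv //.
have hAD : A + D = 1.
  by move: htr; rewrite trE => /(congr1 (@complex.Re R)); rewrite raddfD.
split=> //.
have h1 := hf (- W) (2 * A).
have h2 := hf (2 * D) (- W).
nra.
Qed.
Lemma s2 : s^+2 = 1/2.
Proof. by rewrite /s exprVn sqr_sqrtr // mul1r. Qed.

Definition Af (rho : 'M[C]_2) := complex.Re (rho 0 0).
Definition Df (rho : 'M[C]_2) := complex.Re (rho 1 1).
Definition Wf (rho : 'M[C]_2) := complex.Re (rho 0 1) + complex.Re (rho 1 0).
Definition Lf (d : R) rho := (1/2 + d) * (Af rho - Df rho) + (1/2 - d) * Wf rho.

Lemma win_formula d q (rho : bool -> 'M[C]_2) :
  Af (rho false) + Df (rho false) = 1 -> Af (rho true) + Df (rho true) = 1 ->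
  win_prob d q rho = q false * (1/2 + d * Lf d (rho false)) + q true * (1/2 - d * Lf d (rho true)).
Proof.
move=> h0 h1.
rewrite /win_prob !big_bool /= /coin /outcome_vec /= ket0E ket1E ketpE ketmE !born_cv.
rewrite !mulrN !sqrrN -!expr2 s2.
rewrite /Lf -/(Af _) -/(Df _) -/(Wf _).
have e0 : Df (rho false) = 1 - Af (rho false) by lra.
have e1 : Df (rho true) = 1 - Af (rho true) by lra.
rewrite /Af /Df /Wf in e0 e1 *. rewrite e0 e1; by field.
Qed.
Lemma L_bound d (rho : 'M[C]_2) : is_density rho ->
  - Num.sqrt ((1 + 4 * d ^+ 2) / 2) <= Lf d rho <= Num.sqrt ((1 + 4 * d ^+ 2) / 2).
Proof.
move=> /density_facts [hAD hW]; set S := Num.sqrt _.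
have hS0 : 0 <= S by rewrite sqrtr_ge0.
have hS2 : S ^+ 2 = (1/2 + d)^+2 + (1/2 - d)^+2.
  rewrite sqr_sqrtr; first by field.
  apply: divr_ge0; last by []. nra.
have hL2 : (Lf d rho)^+2 <= S^+2.
  rewrite hS2 /Lf.
  have hr : (Af rho - Df rho)^+2 + (Wf rho)^+2 <= 1.
    rewrite /Af /Df /Wf.
    have -> : (complex.Re (rho 0 0) - complex.Re (rho 1 1)) ^+ 2 =
       (complex.Re (rho 0 0) + complex.Re (rho 1 1)) ^+ 2 - 4 * complex.Re (rho 0 0) * complex.Re (rho 1 1) by ring.
    rewrite hAD expr1n. lra.
  set a := (1/2 + d); set b := (1/2 - d).
  have cs : (a * (Af rho - Df rho) + b * Wf rho)^+2 + (a * Wf rho - b * (Af rho - Df rho))^+2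
     = (a^+2 + b^+2) * ((Af rho - Df rho)^+2 + (Wf rho)^+2) by ring.
  have hab : 0 <= a^+2 + b^+2 by nra.
  have := ler_wpM2l hab hr. rewrite mulr1 => h.
  have : 0 <= (a * Wf rho - b * (Af rho - Df rho))^+2 by apply: sqr_ge0.
  lra.
apply/andP; split; nra.
Qed.

Lemma upper d (q : bool -> R) (rho : bool -> 'M[C]_2) : 0 <= d ->
  strategy q rho -> win_prob d q rho <= opt_value d.
Proof.
move=> hd [hq [hq1 hrho]].
have [h0 _] := density_facts _ (hrho false).
have [h1 _] := density_facts _ (hrho true).
rewrite (win_formula _ _ _ h0 h1) /opt_value.
have /andP[a0 b0] := L_bound d _ (hrho false).
have /andP[a1 b1] := L_bound d _ (hrho true).
set S := Num.sqrt _ in a0 b0 a1 b1 *.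
have q0 := hq false. have q1 := hq true.
have c0 : d * Lf d (rho false) <= d * S by apply: ler_wpM2l.
have c1 : - (d * Lf d (rho true)) <= d * S by rewrite -mulrN; apply: ler_wpM2l => //; lra.
nra.
Qed.
Lemma RCM (a b : R) : a%:C * b%:C = (a*b)%:C :> C. Proof. by rewrite rmorphM. Qed.
Lemma RCD (a b : R) : a%:C + b%:C = (a+b)%:C :> C. Proof. by rewrite rmorphD. Qed.
Lemma RCN (a : R) : - a%:C = (-a)%:C :> C. Proof. by rewrite rmorphN. Qed.
Lemma RC1 : 1 = 1%:C :> C. Proof. by []. Qed.

Lemma halfC : (1/2 : C) = (1/2 : R)%:C.
Proof. by rewrite rmorphM rmorph1 fmorphV rmorph_nat. Qed.

Lemma opt_rhoE (d : R) : opt_rho d =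
  \matrix_(i<2,j<2) (if i == 0 then (if j == 0 then ((1 + opt_rz d)/2)%:C else (opt_rx d/2)%:C)
                     else (if j == 0 then (opt_rx d/2)%:C else ((1 - opt_rz d)/2)%:C)).
Proof.
apply/matrixP=> i j; rewrite !mxE halfC.
case: (I2_cases i) => ->; case: (I2_cases j) => -> /=;
rewrite ?mulr0 ?mulr1 ?addr0 ?add0r ?mulrN1 ?RC1 ?RCN ?RCD ?RCM; apply: (congr1 (real_complex R)); by field.
Qed.
Lemma opt_facts (d : R) :
  opt_rx d ^+ 2 + opt_rz d ^+ 2 = 1 /\
  (1/2 + d) * opt_rz d + (1/2 - d) * opt_rx d = Num.sqrt ((1 + 4 * d ^+ 2) / 2).
Proof.
set T := Num.sqrt (2 + 8 * d ^+ 2).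
have hT2 : T ^+ 2 = 2 + 8 * d ^+ 2 by rewrite sqr_sqrtr //; nra.
have hT0 : 0 < T by rewrite sqrtr_gt0; nra.
have hTn : T != 0 by rewrite gt_eqF.
rewrite /opt_rx /opt_rz -/T; split.
  rewrite !expr_div_n hT2; field; nra.
have -> : (1 + 4 * d ^+ 2) / 2 = ((1 + 4 * d ^+ 2) / T) ^+ 2.
  rewrite expr_div_n hT2; field; nra.
rewrite sqrtr_sqr ger0_norm; last by apply: divr_ge0; nra.
by field.
Qed.

Lemma opt_density (d : R) : is_density (opt_rho d).
Proof.
have [h1 _] := opt_facts d.
split; last first.
  rewrite trE opt_rhoE !mxE /= RCD; apply/(congr1 (real_complex R)); by field.
move=> v.
have -> : v = cv (v 0 0) (v 1 0).
  apply/matrixP=> i j; rewrite !mxE (ord1 j); by case: (I2_cases i) => ->.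
move: (v 0 0) (v 1 0) => [x1 x2] [y1 y2].
rewrite opt_rhoE.
rewrite quad_real lecE /= eqxx /=.
set a := (1 + opt_rz d) / 2. set b := opt_rx d / 2. set c := (1 - opt_rz d) / 2.
have ha : 0 <= a by rewrite /a; nra.
have hc : 0 <= c by rewrite /c; nra.
have hac : a * c = b ^+ 2.
  have e : a * c - b ^+ 2 = (1 - (opt_rx d ^+ 2 + opt_rz d ^+ 2)) / 4 by rewrite /a /b /c; field.
  rewrite h1 subrr mul0r in e; lra.
have hsum : a + c = 1 by rewrite /a /c; field.
set Q := (X in 0 <= X).
have e1 : a * Q = (a * x1 + b * y1) ^+ 2 + (a * x2 + b * y2) ^+ 2 + (a * c - b ^+ 2) * (y1 ^+ 2 + y2 ^+ 2)
  by rewrite /Q; ring.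
have e2 : c * Q = (c * y1 + b * x1) ^+ 2 + (c * y2 + b * x2) ^+ 2 + (a * c - b ^+ 2) * (x1 ^+ 2 + x2 ^+ 2)
  by rewrite /Q; ring.
rewrite hac subrr !mul0r addr0 in e1 e2.
have f1 : 0 <= a * Q.
  by rewrite e1 addr_ge0 ?sqr_ge0.
have f2 : 0 <= c * Q.
  by rewrite e2 addr0 addr_ge0 ?sqr_ge0.
have -> : Q = a * Q + c * Q by rewrite -mulrDl hsum mul1r.
exact: addr_ge0.
Qed.
End S.

Theorem mainTheorem6 (R : rcfType) (delta : R) (hd0 : 0 <= delta) (hd1 : delta <= 1/2) :
  (forall (q : bool -> R) (rho : bool -> 'M[R[i]]_2),
      strategy q rho -> win_prob delta q rho <= opt_value delta)
  /\ strategy (@opt_q R) (fun _ => opt_rho delta)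
  /\ win_prob delta (@opt_q R) (fun _ => opt_rho delta) = opt_value delta
  /\ opt_value (0 : R) = 1/2
  /\ opt_value (1/2 : R) = 1.
Proof.
split; first by move=> q rho H; apply: upper.
have hs : strategy (@opt_q R) (fun _ => opt_rho delta).
  split; first by case; rewrite /opt_q.
  split; first by rewrite /opt_q addr0.
  by move=> _; apply: opt_density.
split=> //.
split.
  have [h0 _] := density_facts _ _ (opt_density R delta).
  rewrite (win_formula _ _ _ _ h0 h0) /opt_q mul1r mul0r addr0 /opt_value.
  have [_ <-] := opt_facts R delta.
  rewrite /Lf /Af /Df /Wf opt_rhoE !mxE /=.
  by field.
split; first by rewrite /opt_value mul0r addr0.
rewrite /opt_value.
have -> : (1 + 4 * (1/2 : R) ^+ 2) / 2 = 1 by field.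
rewrite sqrtr1 mulr1; by field.
Qed.
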